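(* Let $p$ be a prime number and $d$ a positive integer, and let $i\ge1$ be such that $P_0^{i-1}\le d\le P_0^i$. Then $\tau_p(d)=i+1$ if $d=P_j^i$ for some $j\le i$, and $\tau_p(d)=i$ otherwise. Equivalently, $\tau_p(d)=\lceil\log_p((p-1)d+1)\rceil$ if $d$ is a sum of consecutive powers of $p$, and $\tau_p(d)=\lceil\log_p((p-1)d+1)\rceil-1$ otherwise.
   Context: For non-negative integers $j\le i$, $P_j^i=p^j+p^{j+1}+\dots+p^i=\frac{p^{i+1}-p^j}{p-1}$. A sum of consecutive powers of $p$ means an integer of the form $P_j^i$. For a positive integer $d$, $\tau_p(d)$ is the maximum of $s+\min\{v_p(d_1),\dots,v_p(d_s)\}$ over all partitions $d=d_1+\dots+d_s$ into positive integers with $d_{i+1}\le p^{-1}d_i$ for $i=1,\dots,s-1$, where $v_p$ is the $p$-adic valuation. *)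

(* Defs.v *)
From mathcomp Require Import all_boot.
Set Implicit Arguments. Unset Strict Implicit. Unset Printing Implicit Defensive.

Definition Psum (p j i : nat) : nat := \sum_(j <= k < i.+1) p ^ k.

Definition consec_pow_sum (p d : nat) : Prop :=
  exists j i, j <= i /\ d = Psum p j i.

(* an admissible partition d = d_1 + ... + d_s (s >= 1) into positive
   integers with d_{k+1} <= d_k / p, i.e. p * d_{k+1} <= d_k *)
Definition adm_partition (p d : nat) (ds : seq nat) : Prop :=
  [/\ ds != [::], all (fun x => 0 < x) ds, sumn ds = d
    & sorted (fun a b => p * b <= a) ds].

Definition part_value (p : nat) (ds : seq nat) : nat :=
  size ds + \big[minn/logn p (head 0 ds)]_(x <- ds) logn p x.

Definition tau_is (p d v : nat) : Prop :=
  (exists ds, adm_partition p d ds /\ part_value p ds = v) /\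
  (forall ds, adm_partition p d ds -> part_value p ds <= v).

(* Main.v *)
Require Import Defs.
From mathcomp Require Import all_boot zify.

Lemma Psum_recr p j i : j <= i.+1 -> Psum p j i.+1 = Psum p j i + p ^ i.+1.
Proof. by move=> h; rewrite /Psum big_nat_recr. Qed.

Lemma Psum_diag p j : Psum p j j = p ^ j.
Proof. by rewrite /Psum big_nat1. Qed.

Lemma Psum_geom p j i : 0 < p -> j <= i -> (p - 1) * Psum p j i + p ^ j = p ^ i.+1.
Proof.
move=> hp; elim: i => [|i IH] hj.
  have -> : j = 0 by lia.
  rewrite Psum_diag expn0 expn1 muln1; case: p hp => //= p _; lia.
case: (ltnP j i.+1) => hji.
  rewrite Psum_recr; last by lia.
  rewrite mulnDr -addnA (addnC _ (p ^ j)) addnA IH; last by lia.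
  rewrite [p ^ i.+2]expnS; case: p {IH} hp => [|p] // _.
  rewrite subn1 /=; nia.
have -> : j = i.+1 by lia.
rewrite Psum_diag expnS; clear IH; case: p hp => [|p] // _.
rewrite subn1 /= !expnS. nia.
Qed.

Lemma Psum_ge p j i : j <= i -> p ^ i <= Psum p j i.
Proof.
case: i => [|i] h.
  have -> : j = 0 by lia.
  by rewrite Psum_diag.
case: (ltnP j i.+1) => hji; first by rewrite Psum_recr; lia.
have -> : j = i.+1 by lia.
by rewrite Psum_diag.
Qed.

Lemma bigmin_le (f : nat -> nat) a ds y : y \in ds ->
  \big[minn/a]_(x <- ds) f x <= f y.
Proof.
elim: ds => [|z ds IH] //; rewrite in_cons big_cons => /orP[/eqP -> | h].
  exact: geq_minl.
exact: leq_trans (geq_minr _ _) (IH h).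
Qed.

Lemma bigmin_ge (f : nat -> nat) a ds c : c <= a -> (forall x, x \in ds -> c <= f x) ->
  c <= \big[minn/a]_(x <- ds) f x.
Proof.
move=> ha; elim: ds => [|z ds IH] h; first by rewrite big_nil.
rewrite big_cons leq_min h ?mem_head // IH // => x hx; apply: h.
by rewrite in_cons hx orbT.
Qed.

Lemma dvdn_sumn k ds : all (fun y => k %| y) ds -> k %| sumn ds.
Proof. elim: ds => [|z ds IH] //= /andP[h1 h2]; exact: dvdn_add h1 (IH h2). Qed.

Lemma part_lb p m x r : 1 < p -> path (fun a b => p * b <= a) x r ->
  all (fun y => 0 < y) (x :: r) -> all (fun y => p ^ m %| y) (x :: r) ->
  p ^ (m + size r) <= x /\ p ^ (m + size r).+1 <= (p - 1) * sumn (x :: r) + p ^ m.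
Proof.
move=> hp; elim: r x => [|y r IH] x /=.
  rewrite addn0 => _ /andP[hx _] /andP[hd _].
  have hle : p ^ m <= x by apply: dvdn_leq.
  split => //; rewrite addn0 expnS; nia.
move=> /andP[hxy hpath] /and3P[hx hy hpos] /and3P[hdx hdy hdiv].
have [IH1 IH2] := IH y hpath (introT andP (conj hy hpos)) (introT andP (conj hdy hdiv)).
rewrite /= in IH2.
have e1 : p ^ (m + (size r).+1) = p * p ^ (m + size r) by rewrite addnS expnS.
rewrite e1; split; first by nia.
have e2 : p ^ (m + (size r).+1).+1 = p * (p * p ^ (m + size r)) by rewrite addnS !expnS. rewrite e2. rewrite expnS in IH2. set a := p ^ (m + size r) in IH1 IH2 *. set Y := y + sumn r in IH2 *. have hxa : p * a <= x by apply: leq_trans hxy; rewrite leq_mul2l IH1 orbT. have H1 : (p-1) * (p * a) <= (p-1) * x by apply: leq_mul. have e3 : p * (p * a) = (p-1) * (p * a) + p * a by rewrite -{1}(subnK (ltnW hp)) mulnDl mul1n. rewrite e3 mulnDr. set u := (p-1) * (p * a) in H1 *. lia.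
Qed.

Lemma ub p d i ds : prime p -> d <= Psum p 0 i -> adm_partition p d ds ->
  part_value p ds <= i.+1 /\
  (part_value p ds = i.+1 -> exists j, j <= i /\ d = Psum p j i).
Proof.
move=> pp hd [hne hpos hsum hsort].
have hp : 1 < p by apply: prime_gt1.
case: ds hne hpos hsum hsort => [|x r] // _ hpos hsum hsort.
rewrite /part_value.
set m := \big[minn/_]_(y <- _) _.
have hdiv : all (fun y => p ^ m %| y) (x :: r).
  apply/allP => y hy; apply: dvdn_trans (pfactor_dvdnn p y).
  by rewrite dvdn_exp2l // bigmin_le.
have [lb1 lb2] := @part_lb p m x r hp hsort hpos hdiv.
rewrite hsum in lb2.
have geo := @Psum_geom p 0 i (ltnW hp) (leq0n i).
rewrite expn0 in geo.
have hxd : x <= d by rewrite -hsum /= leq_addr.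
have hlt : p ^ (m + size r) < p ^ i.+1.
  apply: (leq_ltn_trans lb1); apply: (leq_ltn_trans hxd); apply: (leq_ltn_trans hd).
  rewrite -geo. have : 0 < p - 1 by lia. move: (Psum p 0 i) => S. nia.
rewrite ltn_exp2l // in hlt.
split; first by rewrite /=; lia.
move=> hv.
have hmi : m + size r = i by move: hv => /=; lia.
exists m; split; first by lia.
have hdd : p ^ m %| d by rewrite -hsum; apply: dvdn_sumn.
case/dvdnP: hdd => E hE.
have geo2 := @Psum_geom p m (m + size r) (ltnW hp) (leq_addr (size r) m).
rewrite hmi in geo2.
have ei : p ^ i.+1 = p ^ m * p ^ (size r).+1 by rewrite -expnD -hmi addnS.
rewrite ei in geo geo2.
have ei2 : p ^ (m + size r).+1 = p ^ m * p ^ (size r).+1 by rewrite -expnD addnS. rewrite ei2 in lb2.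
set a := p ^ m in hE geo geo2 lb2 ei.
set b := p ^ (size r).+1 in geo geo2 lb2 ei.
have ha : 0 < a by rewrite expn_gt0 ltnW.
set q := p - 1 in geo geo2 lb2.
have A : b <= q * E + 1.
  rewrite -(leq_pmul2l ha) mulnDr muln1; move: lb2; rewrite hE. nia.
have B : q * E < b.
  rewrite -(ltn_pmul2l ha); move: hd; rewrite hE => hd.
  have : q * (E * a) <= q * Psum p 0 i by apply: leq_mul.
  rewrite -geo. nia.
have eb : b = q * E + 1 by lia.
have hq : 0 < q by rewrite /q; lia.
rewrite eb mulnDr muln1 in geo2.
have : q * Psum p m i = q * (E * a) by nia.
by move/eqP; rewrite eqn_pmul2l // => /eqP ->.
Qed.

Fixpoint pl (p j n : nat) : seq nat :=
  if n is n'.+1 then p ^ (j + n) :: pl p j n' else [:: p ^ j].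

Lemma pl_size p j n : size (pl p j n) = n.+1.
Proof. by elim: n => //= n ->. Qed.

Lemma pl_path p j n x : p * p ^ (j + n) <= x ->
  path (fun a b => p * b <= a) x (pl p j n).
Proof.
elim: n x => [|n IH] x /=; first by rewrite addn0 => ->.
move=> -> /=; apply: IH; rewrite -expnS addnS.
exact: leqnn.
Qed.

Lemma pl_sorted p j n : sorted (fun a b => p * b <= a) (pl p j n).
Proof.
case: n => [|n] //=; apply: pl_path; rewrite -expnS addnS; exact: leqnn.
Qed.

Lemma pl_pos p j n : 0 < p -> all (fun x => 0 < x) (pl p j n).
Proof. move=> hp; elim: n => [|n IH] /=; by rewrite expn_gt0 hp ?IH. Qed.

Lemma pl_sum p j n : sumn (pl p j n) = Psum p j (j + n).
Proof.
elim: n => [|n IH] /=; first by rewrite addn0 addn0 Psum_diag.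
rewrite IH addnS Psum_recr; last by lia.
by rewrite addnC.
Qed.

Lemma pl_log p j n x : prime p -> x \in pl p j n -> j <= logn p x.
Proof.
move=> pp; elim: n => [|n IH] /=.
  by rewrite inE => /eqP ->; rewrite pfactorK.
rewrite inE => /orP[/eqP -> | h]; last exact: IH.
by rewrite pfactorK // leq_addr.
Qed.

Lemma part1 p d i : prime p -> 0 < d -> 1 <= i -> Psum p 0 i.-1 <= d <= Psum p 0 i ->
     ((exists j, j <= i /\ d = Psum p j i) -> tau_is p d i.+1) /\
     (~ (exists j, j <= i /\ d = Psum p j i) -> tau_is p d i).
Proof.
move=> pp hd0 hi /andP[hlo hhi].
have hp : 1 < p by apply: prime_gt1.
split.
  move=> [j [hj hdj]].
  split; last by move=> ds hds; case: (@ub p d _ _ pp hhi hds).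
  exists (pl p j (i - j)).
  have hadm : adm_partition p d (pl p j (i - j)).
    split.
    - by case: (i - j).
    - exact: pl_pos _ _ _ (ltnW hp).
    - by rewrite pl_sum subnKC.
    - exact: pl_sorted.
  split => //.
  apply/eqP; rewrite eqn_leq; case: (@ub p d _ _ pp hhi hadm) => -> _ /=.
  rewrite /part_value pl_size.
  have : j <= \big[minn/logn p (head 0 (pl p j (i - j)))]_(x <- pl p j (i - j)) logn p x.
    apply: bigmin_ge; last by move=> x hx; exact: pl_log _ _ _ _ pp hx.
    by apply: (@pl_log p j (i - j)) => //; case: (i - j) => /= [|n]; rewrite inE eqxx.
  lia.
move=> hnc.
have key : forall ds, adm_partition p d ds -> i <= part_value p ds -> part_value p ds = i.
  move=> ds hds hge; case: (@ub p d _ _ pp hhi hds) => h1 h2.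
  have : part_value p ds != i.+1 by apply/eqP => /h2.
  lia.
split; last first.
  move=> ds hds; case: (@ub p d _ _ pp hhi hds) => h1 h2.
  have : part_value p ds != i.+1 by apply/eqP => /h2.
  lia.
case: i hi hlo hhi hnc key => [|[|n]] // _ hlo hhi hnc key.
  exists [:: d]; have hadm : adm_partition p d [:: d].
    by split => //=; rewrite ?hd0 ?addn0.
  split => //; apply: key => //; rewrite /part_value /=; lia.
set S := Psum p 0 n.
exists ((d - S) :: pl p 0 n).
have hS1 : Psum p 0 n.+1 = S + p ^ n.+1 by rewrite Psum_recr.
have hadm : adm_partition p d ((d - S) :: pl p 0 n).
  rewrite /= in hlo.
  have hpn : 0 < p ^ n.+1 by rewrite expn_gt0 ltnW.
  split => //=.
  - rewrite (pl_pos p 0 n (ltnW hp)) andbT; lia.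
  - rewrite pl_sum add0n; rewrite -/S; lia.
  - apply: pl_path; rewrite add0n -expnS; lia.
split => //; apply: key => //; rewrite /part_value /= pl_size; lia.
Qed.

Theorem proposition2p20 (p d : nat) :
  prime p -> 0 < d ->
  (forall i, 1 <= i -> Psum p 0 i.-1 <= d <= Psum p 0 i ->
     ((exists j, j <= i /\ d = Psum p j i) -> tau_is p d i.+1) /\
     (~ (exists j, j <= i /\ d = Psum p j i) -> tau_is p d i)) /\
  (consec_pow_sum p d -> tau_is p d (up_log p ((p - 1) * d + 1))) /\
  (~ consec_pow_sum p d -> tau_is p d (up_log p ((p - 1) * d + 1)).-1).
Proof.
move=> pp hd0.
have hp : 1 < p by apply: prime_gt1.
have hq : 0 < p - 1 by lia.
have geo0 : forall i, (p - 1) * Psum p 0 i + 1 = p ^ i.+1.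
  by move=> i; rewrite -(expn0 p); apply: Psum_geom => //; lia.
split; first by move=> i hi hb; apply: part1.
split.
  move=> [j [i [hji ->]]].
  case: i hji => [|i] hji.
    have hj0 : j = 0 by lia.
    rewrite hj0 Psum_diag expn0 muln1 subnK; last by lia.
    rewrite up_lognn //.
    have hb : Psum p 0 (1 : nat).-1 <= 1 <= Psum p 0 1.
      by rewrite /= Psum_diag expn0 /= (leq_trans _ (Psum_ge p 0 1 isT)) // expn1 ltnW.
    have [_ H] := @part1 p 1 1 pp isT isT hb.
    apply: H.
    move=> [k [hk ek]].
    have := Psum_ge p k 1 hk; rewrite -ek expn1; lia.
  have hge := Psum_ge p j i.+1 hji.
  have g1 := Psum_geom p j i.+1 (ltnW hp) hji.
  have g0 := geo0 i.+1.
  have g0' := geo0 i.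
  have hpj : 0 < p ^ j by rewrite expn_gt0 ltnW.
  have hle : Psum p j i.+1 <= Psum p 0 i.+1.
    rewrite -(leq_pmul2l hq); lia.
  have hlt : Psum p 0 i < p ^ i.+1.
    have : Psum p 0 i <= (p - 1) * Psum p 0 i by rewrite leq_pmull.
    lia.
  rewrite (@up_log_eq p i.+1) //; last first.
    apply/andP; split; last by lia.
    have : p ^ i.+1 <= (p - 1) * Psum p j i.+1 by rewrite (leq_trans hge) // leq_pmull.
    lia.
  have hb : Psum p 0 i.+1.-1 <= Psum p j i.+1 <= Psum p 0 i.+1.
    rewrite /= hle andbT; lia.
  have hpos : 0 < Psum p j i.+1 by apply: leq_trans hge; rewrite expn_gt0 ltnW.
  have [H _] := @part1 p (Psum p j i.+1) i.+1 pp hpos isT hb.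
  by apply: H; exists j.
move=> hnc.
have hex : exists i, d <= Psum p 0 i.
  exists d; apply: leq_trans (Psum_ge p 0 d (leq0n d)); exact: ltnW (ltn_expl d hp).
case: (ex_minnP hex) => i0 hi0 hmin.
case: i0 hi0 hmin => [|i] hi0 hmin.
  rewrite Psum_diag expn0 in hi0.
  exfalso; apply: hnc; exists 0, 0; split => //; rewrite Psum_diag; lia.
have hlo : Psum p 0 i < d.
  rewrite ltnNge; apply/negP => h; have := hmin _ h; lia.
have g0 := geo0 i.+1.
have g0' := geo0 i.
rewrite (@up_log_eq p i.+1) //=; last first.
  have : (p - 1) * d <= (p - 1) * Psum p 0 i.+1 by rewrite leq_mul2l hi0 orbT.
  move=> hh; apply/andP; split; last by lia.
  have : (p - 1) * Psum p 0 i < (p - 1) * d by rewrite ltn_pmul2l.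
  lia.
have hb : Psum p 0 i.+1.-1 <= d <= Psum p 0 i.+1 by rewrite /= hi0 ltnW.
have [_ H] := @part1 p d i.+1 pp hd0 isT hb.
apply: H.
move=> [j [hj ej]]; apply: hnc; by exists j, i.+1.
Qed.
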